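(* Let $1\le p\le 2$ and $0\le\nu\le\frac{\pi}{2}$. The function $K(\theta)=\cos^p(\theta)+\cos^p(\frac{\pi}{2}-\nu-\theta)$ on the interval $0\le\theta\le\frac{\pi}{2}-\nu$ attains its minimum only at the endpoints of the interval. In particular $K(\theta)\ge 1+\sin^p\nu$ for all such $\theta$. *)

(* Defs.v *)
From HB Require Import structures.
From mathcomp Require Import all_boot all_order all_algebra.
From mathcomp Require Import all_classical all_reals all_analysis.
Set Implicit Arguments. Unset Strict Implicit. Unset Printing Implicit Defensive.
Import Order.TTheory GRing.Theory Num.Theory.
Local Open Scope ring_scope.

(* K(theta) = cos^p(theta) + cos^p(pi/2 - nu - theta); powR with 0 `^ p = 0 for p <> 0. *)
Definition Kfun (R : realType) (p nu theta : R) : R :=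
  cos theta `^ p + cos (pi / 2 - nu - theta) `^ p.

(* Main.v *)
Require Import Defs.
From HB Require Import structures.
From mathcomp Require Import all_boot all_order all_algebra.
From mathcomp Require Import all_classical all_reals all_analysis.
From mathcomp Require Import ring lra.
Import Order.TTheory GRing.Theory Num.Theory.
Local Open Scope ring_scope.

Lemma concave_pow (R : realType) (q l u v : R) : 0 < q -> q <= 1 ->
  0 <= l -> l <= 1 -> 0 <= u -> 0 <= v ->
  l * u `^ q + (1 - l) * v `^ q <= (l * u + (1 - l) * v) `^ q.
Proof.
move=> q0 q1 l0 l1 u0 v0.
have r1 : 1 <= q^-1 by rewrite invf_ge1.
have := @convex_powR R _ r1 (Itv01 l0 l1) (u `^ q) (v `^ q).
rewrite !inE /= !in_itv /= !andbT !powR_ge0 => /(_ isT isT).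
rewrite [X in X `^ _ <= _]convRE convRE /= -!powRrM mulfV ?gt_eqF // !powRr1 // => H.
have s0 : 0 <= l * u `^ q + (1 - l) * v `^ q.
  by rewrite addr_ge0 // mulr_ge0 // ?powR_ge0 ?subr_ge0.
have -> : l * u `^ q + (1 - l) * v `^ q = ((l * u `^ q + (1 - l) * v `^ q) `^ q^-1) `^ q.
  by rewrite -powRrM mulVf ?gt_eqF // powRr1.
apply: ge0_ler_powR => //; first exact: ltW.
- by rewrite nnegrE powR_ge0.
- by rewrite nnegrE addr_ge0 // mulr_ge0 // subr_ge0.
Qed.

Lemma maj_pow (R : realType) (q A B C : R) : 0 < q -> q <= 1 ->
  0 <= C -> C <= A -> A <= 1 -> C <= B -> B <= 1 -> 1 + C <= A + B ->
  1 + C `^ q <= A `^ q + B `^ q.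
Proof.
move=> q0 q1 C0 CA A1 CB B1 hs.
have [C1|C1] := eqVneq C 1.
  have -> : A = 1 by lra.
  have -> : B = 1 by lra.
  by rewrite C1 powR1 lexx.
have C1' : C < 1 by rewrite lt_neqAle C1 /=; lra.
set l := (1 - A) / (1 - C).
have l0 : 0 <= l by rewrite /l divr_ge0 //; lra.
have l1 : l <= 1 by rewrite /l ler_pdivrMr; lra.
have eA : A = l * C + (1 - l) * 1 by rewrite /l; field; lra.
have eB : 1 + C - A = (1 - l) * C + (1 - (1 - l)) * 1 by rewrite /l; field; lra.
have h1 := @concave_pow R q l C 1 q0 q1 l0 l1 C0 ler01.
have l0' : 0 <= 1 - l by lra.
have l1' : 1 - l <= 1 by lra.
have h2 := @concave_pow R q (1 - l) C 1 q0 q1 l0' l1' C0 ler01.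
rewrite -eA -eB powR1 in h1 h2.
have h3 : (1 + C - A) `^ q <= B `^ q.
  apply: ge0_ler_powR; rewrite ?nnegrE; try lra; exact: ltW.
lra.
Qed.

Lemma cos_le (R : realType) (u v : R) : 0 <= u -> u <= v -> v <= pi -> cos v <= cos u.
Proof.
move=> u0 uv vpi; rewrite leNgt ltr_cos ?in_itv /= -?leNgt //; apply/andP; split => //.
  exact: le_trans uv. exact: le_trans vpi.
Qed.

Lemma pow_sq (R : realType) (c p : R) : 0 <= c -> c `^ p = (c ^+ 2) `^ (p / 2).
Proof.
move=> c0; rewrite -(@powR_mulrn _ c 2) // -powRrM; congr (_ `^ _).
rewrite mulrC -mulrA mulVf //.
by rewrite mulr1.
Qed.

Lemma trig_id (R : realType) (x y : R) :
  cos x ^+ 2 + cos y ^+ 2 - 1 - cos (x + y) ^+ 2 = 2 * cos (x + y) * sin x * sin y.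
Proof.
rewrite cosD; apply/eqP; rewrite -subr_eq0.
have hx : 1 - cos x ^+ 2 - sin x ^+ 2 = 0 by rewrite -addrA -opprD cos2Dsin2 subrr.
have hy : 1 - cos y ^+ 2 - sin y ^+ 2 = 0 by rewrite -addrA -opprD cos2Dsin2 subrr.
set a := cos x; set b := sin x; set c := cos y; set d := sin y.
have -> : a ^+ 2 + c ^+ 2 - 1 - (a * c - b * d) ^+ 2 - 2 * (a * c - b * d) * b * d =
  - ((1 - a ^+ 2 - b ^+ 2) * (1 - c ^+ 2 - d ^+ 2) + (1 - a ^+ 2 - b ^+ 2) * d ^+ 2
     + b ^+ 2 * (1 - c ^+ 2 - d ^+ 2)) by ring.
by rewrite hx hy !(mul0r, mulr0, addr0) oppr0.
Qed.

Lemma key (R : realType) (p x y : R) : 1 <= p -> p <= 2 -> 0 <= x -> 0 <= y ->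
  x + y <= pi / 2 ->
  (1 + cos (x + y) ^+ 2 <= cos x ^+ 2 + cos y ^+ 2 /\
      0 <= cos (x + y) ^+ 2 /\ cos (x + y) ^+ 2 <= cos x ^+ 2 /\ cos x ^+ 2 <= 1 /\
      cos (x + y) ^+ 2 <= cos y ^+ 2 /\ cos y ^+ 2 <= 1) /\
  1 + cos (x + y) `^ p <= cos x `^ p + cos y `^ p.
Proof.
move=> hp1 hp2 x0 y0 hxy.
have pi0 := @pi_gt0 R.
have cx0 : 0 <= cos x by apply: cos_ge0_pihalf; apply/andP; split; lra.
have cy0 : 0 <= cos y by apply: cos_ge0_pihalf; apply/andP; split; lra.
have ce0 : 0 <= cos (x + y) by apply: cos_ge0_pihalf; apply/andP; split; lra.
have cex : cos (x + y) <= cos x by apply: cos_le; lra.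
have cey : cos (x + y) <= cos y by apply: cos_le; lra.
have sx0 : 0 <= sin x by apply: sin_ge0_pi; apply/andP; split; lra.
have sy0 : 0 <= sin y by apply: sin_ge0_pi; apply/andP; split; lra.
have cx1 := cos_le1 x. have cy1 := cos_le1 y.
have hs : 1 + cos (x + y) ^+ 2 <= cos x ^+ 2 + cos y ^+ 2.
  have := @trig_id R x y.
  have : 0 <= 2 * cos (x + y) * sin x * sin y by rewrite !mulr_ge0.
  lra.
have h1 : 0 <= cos (x + y) ^+ 2 by exact: sqr_ge0.
have h2 : cos (x + y) ^+ 2 <= cos x ^+ 2 by nra.
have h3 : cos x ^+ 2 <= 1 by nra.
have h4 : cos (x + y) ^+ 2 <= cos y ^+ 2 by nra.
have h5 : cos y ^+ 2 <= 1 by nra.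
split; first by do !split.
rewrite !(@pow_sq R _ p) //.
apply: maj_pow => //; lra.
Qed.

Lemma lt_powR (R : realType) (a q : R) : 0 < a -> a < 1 -> 0 < q -> q < 1 -> a < a `^ q.
Proof.
move=> a0 a1 q0 q1.
have la := @ln_lt0 R a; have {la} la : ln a < 0 by apply: la; apply/andP.
rewrite /powR gt_eqF //.
rewrite -{1}(@lnK R a) ?posrE // ltr_expR.
nra.
Qed.

Lemma key_strict (R : realType) (p x y : R) : 1 <= p -> p <= 2 -> 0 < x -> 0 < y ->
  x + y <= pi / 2 -> (p < 2 \/ x + y < pi / 2) ->
  1 + cos (x + y) `^ p < cos x `^ p + cos y `^ p.
Proof.
move=> hp1 hp2 x0 y0 hxy hor.
have pi0 := @pi_gt0 R.
have [[hs [h1 [h2 [h3 [h4 h5]]]]] _] := @key R p x y hp1 hp2 (ltW x0) (ltW y0) hxy.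
have cx0 : 0 <= cos x by apply: cos_ge0_pihalf; apply/andP; split; lra.
have cy0 : 0 <= cos y by apply: cos_ge0_pihalf; apply/andP; split; lra.
rewrite !(@pow_sq R _ p) //; last by apply: cos_ge0_pihalf; apply/andP; split; lra.
have q0 : 0 < p / 2 by lra.
have [lt|eq] := ltP (x + y) (pi / 2).
  have ce0 : 0 < cos (x + y) by apply: cos_gt0_pihalf; apply/andP; split; lra.
  have sx0 : 0 < sin x by apply: sin_gt0_pi; apply/andP; split; lra.
  have sy0 : 0 < sin y by apply: sin_gt0_pi; apply/andP; split; lra.
  have hs' : 1 + cos (x + y) ^+ 2 < cos x ^+ 2 + cos y ^+ 2.
    have := @trig_id R x y.
    have : 0 < 2 * cos (x + y) * sin x * sin y by rewrite !mulr_gt0.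
    lra.
  have q1 : p / 2 <= 1 by lra.
  pose A := cos x ^+ 2; pose B := cos y ^+ 2; pose C := cos (x + y) ^+ 2.
  rewrite -/A -/B -/C in hs' h1 h2 h3 h4 h5 *.
  have g1 : C <= 1 + C - A by lra.
  have g2 : 1 + C - A <= 1 by lra.
  have g3 : 1 + C <= A + (1 + C - A) by lra.
  have := @maj_pow R (p / 2) A (1 + C - A) C q0 q1 h1 h2 h3 g1 g2 g3.
  have : (1 + C - A) `^ (p / 2) < B `^ (p / 2).
    apply: gt0_ltr_powR => //; rewrite ?nnegrE; lra.
  lra.
have e : x + y = pi / 2 by lra.
have p2 : p < 2 by case: hor => //; lra.
have ce : cos (x + y) = 0 by rewrite e cos_pihalf.
have hs2 : cos x ^+ 2 + cos y ^+ 2 = 1.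
  have := @trig_id R x y; rewrite ce !(mulr0, mul0r) expr0n /=; lra.
rewrite ce expr0n /= powR0; last by rewrite gt_eqF.
have cx1 : 0 < cos x by apply: cos_gt0_pihalf; apply/andP; split; lra.
have cy1 : 0 < cos y by apply: cos_gt0_pihalf; apply/andP; split; lra.
have A0 : 0 < cos x ^+ 2 by exact: exprn_gt0.
have B0 : 0 < cos y ^+ 2 by exact: exprn_gt0.
have q1 : p / 2 < 1 by lra.
have A1 : cos x ^+ 2 < 1 by lra.
have B1 : cos y ^+ 2 < 1 by lra.
have := @lt_powR R (cos x ^+ 2) (p / 2) A0 A1 q0 q1.
have := @lt_powR R (cos y ^+ 2) (p / 2) B0 B1 q0 q1.
lra.
Qed.

Theorem lemma2p4 (R : realType) (p nu : R)
  (hp1 : 1 <= p) (hp2 : p <= 2) (hnu0 : 0 <= nu) (hnu1 : nu <= pi / 2) :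
  (* the minimum over [0, pi/2 - nu] is attained at the endpoints *)
  (forall theta : R, 0 <= theta -> theta <= pi / 2 - nu ->
     Kfun p nu 0 <= Kfun p nu theta /\ Kfun p nu (pi / 2 - nu) <= Kfun p nu theta) /\
  (* ... and only there (excluding the degenerate constant case p = 2, nu = 0) *)
  (~ (p = 2 /\ nu = 0) ->
   forall theta : R, 0 < theta -> theta < pi / 2 - nu ->
     Num.min (Kfun p nu 0) (Kfun p nu (pi / 2 - nu)) < Kfun p nu theta) /\
  (* in particular *)
  (forall theta : R, 0 <= theta -> theta <= pi / 2 - nu ->
     1 + sin nu `^ p <= Kfun p nu theta).
Proof.
have pi0 := @pi_gt0 R.
have K0 : Kfun p nu 0 = 1 + cos (pi / 2 - nu) `^ p.
  by rewrite /Kfun cos0 subr0 powR1.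
have Ka : Kfun p nu (pi / 2 - nu) = 1 + cos (pi / 2 - nu) `^ p.
  by rewrite /Kfun subrr cos0 powR1 /= addrC.
have sn : sin nu = cos (pi / 2 - nu).
  by rewrite cosB cos_pihalf sin_pihalf mul0r mul1r add0r.
have weak : forall theta, 0 <= theta -> theta <= pi / 2 - nu ->
    1 + cos (pi / 2 - nu) `^ p <= Kfun p nu theta.
  move=> th th0 th1.
  have e : th + (pi / 2 - nu - th) = pi / 2 - nu by ring.
  have := @key R p th (pi / 2 - nu - th) hp1 hp2 th0 ltac:(lra) ltac:(lra).
  by rewrite e /Kfun => -[_].
split; [|split].
- by move=> th th0 th1; rewrite K0 Ka; split; apply: weak.
- move=> hne th th0 th1.
  rewrite K0 Ka minxx.
  have e : th + (pi / 2 - nu - th) = pi / 2 - nu by ring.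
  have hy : 0 < pi / 2 - nu - th by lra.
  have hs : th + (pi / 2 - nu - th) <= pi / 2 by lra.
  have hor : p < 2 \/ th + (pi / 2 - nu - th) < pi / 2.
    have [nu0|nu0] := eqVneq nu 0.
      left; rewrite lt_neqAle hp2 andbT; apply/eqP => p2; exact: hne.
    right; rewrite e; have : 0 < nu by rewrite lt_neqAle eq_sym nu0.
    lra.
  have := @key_strict R p th (pi / 2 - nu - th) hp1 hp2 th0 hy hs hor.
  by rewrite e.
- by move=> th th0 th1; rewrite sn; apply: weak.
Qed.
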